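(* Given any instance of the 1-D Crazy Frog Puzzle, one can construct in polynomial time an instance of the 1-D Crazy Frog Puzzle in which the frog is placed on the leftmost cell of the board, such that the new instance has a solution if and only if the original one does.
   Context: 1-D Crazy Frog Puzzle: a board consisting of a single row of cells indexed $0,1,\dots,w-1$, each cell empty or blocked, a starting cell on which a frog is placed (counting as visited), and a sequence of $m$ positive integer jump lengths $J_1,\dots,J_m$, where $m$ is the number of empty cells. Question: is there a choice of signs $s_i\in\{-1,+1\}$ such that the positions $p_i=p_{i-1}+s_iJ_i$ ($p_0$ the start) always lie in $\{0,\dots,w-1\}$, are never blocked cells and are never previously visited, so that every empty cell is visited exactly once? *)

(* Defs.v *)
From mathcomp Require Import all_boot.
Set Implicit Arguments. Unset Strict Implicit. Unset Printing Implicit Defensive.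

(* board: cell i is empty iff nth false board i = true; w = size board. *)
Record frog_instance := FrogInstance {
  fi_board : seq bool;
  fi_start : nat;
  fi_jumps : seq nat
}.

Definition valid_instance (I : frog_instance) : bool :=
  [&& fi_start I < size (fi_board I),
      nth false (fi_board I) (fi_start I),
      all (fun J => 0 < J) (fi_jumps I)
    & (size (fi_jumps I)).+1 == count id (fi_board I)].

Definition solvable (I : frog_instance) : Prop :=
  let w := size (fi_board I) in
  let js := fi_jumps I in
  exists ps : seq nat,
    [/\ size ps = size js,
        (forall i, i < size js ->
           let p := nth 0 (fi_start I :: ps) i in
           let q := nth 0 ps i in
           q = p + nth 0 js i \/ p = q + nth 0 js i),
        all (fun q => (q < w) && nth false (fi_board I) q) ps,
        uniq (fi_start I :: ps)
      & (forall x, x < w -> nth false (fi_board I) x -> x \in fi_start I :: ps)].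

(* (symbol 0 is the blank of the Turing machine)                     *)

(* little-endian binary, bit 0 -> symbol 1, bit 1 -> symbol 2;
   0 is encoded by the empty string *)
Fixpoint bin_aux (fuel n : nat) : seq nat :=
  match fuel with
  | 0 => [::]
  | fuel'.+1 => if n == 0 then [::]
                else (if odd n then 2 else 1) :: bin_aux fuel' n./2
  end.
Definition bin (n : nat) : seq nat := bin_aux n n.

Definition encode (I : frog_instance) : seq nat :=
  [seq (if b then 1 else 2) | b <- fi_board I] ++ 3 :: bin (fi_start I)
  ++ flatten [seq 3 :: bin J | J <- fi_jumps I].

Inductive tm_move := MoveL | MoveR | Stay.

Record TM := MkTM {
  tm_nstates : nat;             (* states are 0 .. tm_nstates - 1 *)
  tm_nsym : nat;                (* tape symbols are 0 .. tm_nsym - 1, 0 = blank *)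
  tm_init : nat;
  tm_delta : nat -> nat -> option (nat * nat * tm_move)  (* None = halt *)
}.

Definition tm_wf (M : TM) : Prop :=
  [/\ tm_init M < tm_nstates M,
      4 <= tm_nsym M &
      forall q a, q < tm_nstates M -> a < tm_nsym M ->
        match tm_delta M q a with
        | Some (q', a', _) => (q' < tm_nstates M) && (a' < tm_nsym M)
        | None => true
        end].

(* configuration: state, reversed left part, head symbol, right part *)
Definition config := (nat * seq nat * nat * seq nat)%type.

Definition init_config (M : TM) (input : seq nat) : config :=
  match input with
  | [::] => (tm_init M, [::], 0, [::])
  | a :: r => (tm_init M, [::], a, r)
  end.

Definition halted (M : TM) (c : config) : bool :=
  let: (q, _, a, _) := c in
  if tm_delta M q a is None then true else false.

Definition tm_step (M : TM) (c : config) : config :=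
  let: (q, l, a, r) := c in
  match tm_delta M q a with
  | None => c
  | Some (q', a', mv) =>
    match mv with
    | Stay => (q', l, a', r)
    | MoveL => match l with
               | [::] => (q', [::], 0, a' :: r)
               | x :: l' => (q', l', x, a' :: r)
               end
    | MoveR => match r with
               | [::] => (q', a' :: l, 0, [::])
               | x :: r' => (q', a' :: l, x, r')
               end
    end
  end.

Definition tm_output (c : config) : seq nat :=
  let: (_, _, a, r) := c in
  let s := a :: r in take (find (pred1 0) s) s.

Definition computes_within (M : TM) (x : seq nat) (T : nat) (y : seq nat) : Prop :=
  exists t, t <= T /\
    let c := iter t (tm_step M) (init_config M x) in
    halted M c /\ tm_output c = y.

(* Main.v *)
Require Import Defs.
From mathcomp Require Import all_boot.
From mathcomp Require Import zify.
Set Implicit Arguments. Unset Strict Implicit. Unset Printing Implicit Defensive.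

Inductive mode := mA | mC | mD.
Inductive St := Sw of mode & seq nat | Fl of seq nat | Rt | Hl.

Fixpoint enc_buf (b : seq nat) : nat := if b is c :: b' then c + 4 * enc_buf b' else 0.
Fixpoint dec_buf (f n : nat) : seq nat :=
  match f with 0 => [::] | f'.+1 => if n == 0 then [::] else (n %% 4) :: dec_buf f' (n %/ 4) end.

Definition enc (s : St) : nat :=
  match s with
  | Sw mA b => 8 * enc_buf b
  | Sw mC b => 8 * enc_buf b + 1
  | Sw mD b => 8 * enc_buf b + 2
  | Fl b => 8 * enc_buf b + 3
  | Rt => 4 | Hl => 5 end.

Definition dec (n : nat) : St :=
  let b := dec_buf n (n %/ 8) in
  match n %% 8 with
  | 0 => Sw mA b | 1 => Sw mC b | 2 => Sw mD b | 3 => Fl b | 4 => Rt | _ => Hl end.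

Definition emit (m : mode) (a : nat) : mode * seq nat :=
  match m with
  | mA => if a == 3 then (mC, [:: 3; 3]) else (mA, [:: a])
  | mC => if a == 2 then (mC, [:: 1]) else if a == 1 then (mD, [:: 2]) else (mD, [:: 2; 3])
  | mD => (mD, [:: a]) end.

Definition tl (m : mode) : seq nat := if m is mC then [:: 2] else [::].

Definition stepf (s : St) (a : nat) : option (St * nat * tm_move) :=
  match s with
  | Sw m b => if a == 0 then Some (Fl (b ++ tl m), 0, Stay)
              else match b with
                   | c :: b' => let: (m', e) := emit m a in Some (Sw m' (b' ++ e), c, MoveR)
                   | [::] => None end
  | Fl b => match b with c :: b' => Some (Fl b', c, MoveR) | [::] => Some (Rt, 0, MoveL) end
  | Rt => if a == 0 then Some (Hl, 0, MoveR) else Some (Rt, a, MoveL)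
  | Hl => None end.

Definition NS := 2048.
Definition delta (q a : nat) : option (nat * nat * tm_move) :=
  match stepf (dec q) a with
  | Some (s', a', mv) => if (enc s' < NS) && (a' < 4) then Some (enc s', a', mv) else None
  | None => None end.
Definition M := MkTM NS 4 8 delta.

Lemma M_wf : tm_wf M.
Proof.
split => // q a _ _ /=; rewrite /delta.
case: (stepf _ _) => [[[s' a'] mv]|] //; by case: ifP.
Qed.

Definition in123 (a : nat) : bool := (0 < a) && (a < 4).

Lemma size_enc_buf b : all in123 b -> size b <= enc_buf b.
Proof. elim: b => //= c b IH /andP[/andP[H1 H2] /IH]; lia. Qed.

Lemma dec_buf_enc b f : all in123 b -> size b <= f -> dec_buf f (enc_buf b) = b.
Proof.
elim: b f => [|c b IH] [|f] //= /andP[/andP[H1 H2] Hb] Hs.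
have -> : (c + 4 * enc_buf b == 0) = false by apply/eqP; lia.
have -> : (c + 4 * enc_buf b) %% 4 = c by lia.
have -> : (c + 4 * enc_buf b) %/ 4 = enc_buf b by lia.
by rewrite IH.
Qed.

Lemma enc_buf_lt b : all in123 b -> enc_buf b < 4 ^ size b.
Proof. elim: b => //= c b IH /andP[/andP[H1 H2] /IH]; rewrite expnS; lia. Qed.

Lemma enc_buf_256 b : all in123 b -> size b <= 4 -> enc_buf b < 256.
Proof.
move=> Hb Hs; have := enc_buf_lt Hb.
have : 4 ^ size b <= 4 ^ 4 by rewrite leq_exp2l.
move=> /= H1 H2; lia.
Qed.

Definition okst (s : St) : bool :=
  match s with Sw _ b | Fl b => all in123 b && (size b <= 4) | _ => true end.

Lemma dec_enc s : okst s -> dec (enc s) = s.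
Proof.
case: s => [m b|b||] //= /andP[Hb Hs].
- have Hl := size_enc_buf Hb.
  case: m => /=; rewrite /dec.
  + have -> : (8 * enc_buf b) %% 8 = 0 by lia.
    have -> : (8 * enc_buf b) %/ 8 = enc_buf b by lia.
    by rewrite dec_buf_enc //; lia.
  + have -> : (8 * enc_buf b + 1) %% 8 = 1 by lia.
    have -> : (8 * enc_buf b + 1) %/ 8 = enc_buf b by lia.
    by rewrite dec_buf_enc //; lia.
  + have -> : (8 * enc_buf b + 2) %% 8 = 2 by lia.
    have -> : (8 * enc_buf b + 2) %/ 8 = enc_buf b by lia.
    by rewrite dec_buf_enc //; lia.
- have Hl := size_enc_buf Hb; rewrite /dec.
  have -> : (8 * enc_buf b + 3) %% 8 = 3 by lia.
  have -> : (8 * enc_buf b + 3) %/ 8 = enc_buf b by lia.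
  by rewrite dec_buf_enc //; lia.
Qed.

Lemma enc_lt s : okst s -> enc s < NS.
Proof.
case: s => [m b|b||] //= /andP[Hb Hs]; have := enc_buf_256 Hb Hs; rewrite /NS;
  try case: m; lia.
Qed.

Lemma deltaE s a s' a' mv : okst s -> okst s' -> a' < 4 ->
  stepf s a = Some (s', a', mv) -> tm_delta M (enc s) a = Some (enc s', a', mv).
Proof.
move=> H1 H2 H3 H4; rewrite /= /delta dec_enc // H4 enc_lt //= H3 //.
Qed.

Definition cfg (q : nat) (l u : seq nat) : config := (q, l, head 0 u, behead u).

Lemma stepR q l a u q' a' : tm_delta M q a = Some (q', a', MoveR) ->
  tm_step M (q, l, a, u) = cfg q' (a' :: l) u.
Proof. by rewrite /tm_step => ->; case: u. Qed.

Definition pot (m : mode) : nat := match m with mA => 2 | mC => 1 | mD => 0 end.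

Fixpoint out (m : mode) (u : seq nat) : seq nat :=
  if u is a :: u' then let: (m', e) := emit m a in e ++ out m' u' else tl m.

Lemma emit_ok m a : in123 a -> all in123 (emit m a).2 /\ (emit m a).2 != [::] /\
  size (emit m a).2 + pot (emit m a).1 <= pot m + 1.
Proof. by case: a => [|[|[|[|a]]]] //; case: m. Qed.

Lemma sweep u : forall m b l, all in123 u -> all in123 b -> b != [::] -> size b + pot m <= 3 ->
 exists w m' b', iter (size u) (tm_step M) (cfg (enc (Sw m b)) l u)
     = cfg (enc (Sw m' b')) (rev w ++ l) [::] /\ w ++ b' ++ tl m' = b ++ out m u
   /\ all in123 b' /\ b' != [::] /\ size b' + pot m' <= 3 /\ size w = size u.
Proof.
elim: u => [|a u IH] m b l.
  by move=> _ Hb Hn Hs; exists [::], m, b; rewrite /=.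
move=> /andP[Ha Hu] Hb Hn Hs.
case: b Hb Hn Hs => [|c b'] // Hcb _ Hs.
have /andP[Hc Hb'] : in123 c && all in123 b' := Hcb.
have [He1 [He2 He3]] := emit_ok m Ha.
case E: (emit m a) He1 He2 He3 => [m' e] He1 He2 He3; rewrite /= in He1 He2 He3.
have Hst : tm_step M (cfg (enc (Sw m (c :: b'))) l (a :: u)) = cfg (enc (Sw m' (b' ++ e))) (c :: l) u.
  have O1 : okst (Sw m (c :: b')) by rewrite /okst /= Hc Hb' /=; move: Hs => /=; lia.
  have O2 : okst (Sw m' (b' ++ e)) by rewrite /okst all_cat Hb' He1 size_cat /=; move: Hs => /=; lia.
  have O3 : c < 4 by move: Hc; rewrite /in123 => /andP[].
  have O4 : stepf (Sw m (c :: b')) a = Some (Sw m' (b' ++ e), c, MoveR).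
    have -> : stepf (Sw m (c :: b')) a = let: (m', e) := emit m a in Some (Sw m' (b' ++ e), c, MoveR).
      by rewrite /= ifF //; move: Ha; rewrite /in123 eqn0Ngt => /andP[-> _].
    by rewrite E.
  rewrite [cfg _ l (a :: u)]/cfg; apply: stepR; exact: deltaE O1 O2 O3 O4.
have Hx1 : all in123 (b' ++ e) by rewrite all_cat Hb' He1.
have Hx2 : b' ++ e != [::] by case: (b') He2 => //=; case: (e).
have Hx3 : size (b' ++ e) + pot m' <= 3 by rewrite size_cat; move: Hs => /=; lia.
have [w [m'' [b'' [H1 [H2 [H3 [H4 [H5 H6]]]]]]]] := IH m' (b' ++ e) (c :: l) Hu Hx1 Hx2 Hx3.
exists (c :: w), m'', b''; rewrite (_ : size (a :: u) = (size u).+1) // iterSr Hst H1 rev_cons cat_rcons; split => //.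
split; last by rewrite /= H6.
by rewrite /= E H2 -catA.
Qed.

Lemma flush bf l : all in123 bf -> size bf <= 4 ->
  iter (size bf) (tm_step M) (enc (Fl bf), l, 0, [::]) = (enc (Fl [::]), rev bf ++ l, 0, [::]).
Proof.
elim: bf l => [|c bf IH] l // Hcb Hs.
have /andP[Hc Hb] : in123 c && all in123 bf := Hcb.
rewrite (_ : size (c :: bf) = (size bf).+1) // iterSr.
have -> : tm_step M (enc (Fl (c :: bf)), l, 0, [::]) = cfg (enc (Fl bf)) (c :: l) [::].
  apply: stepR; apply: deltaE => //=.
  - by rewrite Hc Hb /=; move: Hs => /=; lia.
  - by rewrite Hb /=; move: Hs => /=; lia.
  - by move: Hc; rewrite /in123 => /andP[].
by rewrite /cfg /= IH //; [rewrite rev_cons cat_rcons | move: Hs => /=; lia].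
Qed.

Lemma stepL0 q a r q' a' : tm_delta M q a = Some (q', a', MoveL) ->
  tm_step M (q, [::], a, r) = (q', [::], 0, a' :: r).
Proof. by rewrite /tm_step => ->. Qed.
Lemma stepLc q x l a r q' a' : tm_delta M q a = Some (q', a', MoveL) ->
  tm_step M (q, x :: l, a, r) = (q', l, x, a' :: r).
Proof. by rewrite /tm_step => ->. Qed.

Lemma ret l : forall a r, all in123 (a :: l) -> exists y ys,
  iter (size l).+2 (tm_step M) (enc Rt, l, a, r) = (enc Hl, [:: 0], y, ys) /\ y :: ys = rev (a :: l) ++ r.
Proof.
have dRa : forall a, in123 a -> tm_delta M (enc Rt) a = Some (enc Rt, a, MoveL).
  move=> a Ha; apply: deltaE => //; first by move: Ha; rewrite /in123 => /andP[].
  by rewrite /= ifF //; move: Ha; rewrite /in123 eqn0Ngt => /andP[-> _].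
have dR0 : tm_delta M (enc Rt) 0 = Some (enc Hl, 0, MoveR) by apply: deltaE.
elim: l => [|x l IH] a r Hal.
  have /andP[Ha _] : in123 a && true := Hal.
  exists a, r; split => //.
  rewrite iterSr iterSr (stepL0 _ (dRa _ Ha)) (stepR _ _ dR0) //.
have /andP[Ha Hl] : in123 a && all in123 (x :: l) := Hal.
have [y [ys [H1 H2]]] := IH x (a :: r) Hl.
exists y, ys; rewrite (_ : size (x :: l) = (size l).+1) // iterSr (stepLc _ _ _ (dRa _ Ha)) H1; split => //.
by rewrite H2 [rev (a :: _)]rev_cons cat_rcons.
Qed.

Lemma bin_aux_fuel f g n : n <= f -> n <= g -> bin_aux f n = bin_aux g n.
Proof.
elim: f g n => [|f IH] [|g] n /=; try by case: n.
case: (n =P 0) => // /eqP Hn Hf Hg; congr (_ :: _); apply: IH; lia.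
Qed.

Lemma binE n : bin n = if n == 0 then [::] else (if odd n then 2 else 1) :: bin n./2.
Proof.
rewrite /bin; case: n => [|n] //=; congr (_ :: _); apply: bin_aux_fuel; lia.
Qed.

Lemma bin_in123 n : all in123 (bin n).
Proof. rewrite /bin; elim: n {-1}n => [|f IH] n //=; case: (n == 0) => //=; rewrite IH; by case: odd. Qed.

Lemma out_D u : out mD u = u.
Proof. by elim: u => //= a u ->. Qed.

Lemma out_C_bin n R : (R = [::] \/ exists R', R = 3 :: R') -> out mC (bin n ++ R) = bin n.+1 ++ R.
Proof.
move=> HR; elim/ltn_ind: n => n IH.
rewrite (binE n.+1) /=; case: (n =P 0) => [->|/eqP Hn].
  rewrite binE /=; case: HR => [->|[R' ->]] //=; by rewrite out_D.
rewrite binE (negbTE Hn).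
have Hd := odd_double_half n.
case Ho: (odd n) Hd => /= Hd.
- rewrite IH; last by lia.
  by rewrite uphalf_half Ho.
- by rewrite out_D uphalf_half Ho.
Qed.

Definition fb (b : bool) : nat := if b then 1 else 2.

Lemma out_A_board B R : out mA (map fb B ++ R) = map fb B ++ out mA R.
Proof. by elim: B => //= b B IH; case: b; rewrite /= IH. Qed.

Lemma encode_in123 I : all in123 (encode I).
Proof.
case: I => B s Js; rewrite /encode /= all_cat /=.
apply/andP; split; first by rewrite all_map; apply/allP => b _ /=; case: b.
rewrite all_cat bin_in123 /=; elim: Js => //= J Js IH; by rewrite all_cat /= bin_in123.
Qed.

Definition newI (I : frog_instance) : frog_instance :=
  FrogInstance (true :: fi_board I) 0 ((fi_start I).+1 :: fi_jumps I).

Lemma out_encode I : 1 :: out mA (encode I) = encode (newI I).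
Proof.
case: I => B s Js; rewrite /encode /= -/(map fb B) -/(map fb B).
rewrite out_A_board /= out_C_bin //.
case: Js => [|J Js]; [by left | right; by eexists].
Qed.

Lemma newI_valid I : valid_instance I -> valid_instance (newI I).
Proof.
case: I => B s Js; rewrite /valid_instance /= => /and4P[H1 H2 H3 /eqP H4].
rewrite H3 /=; apply/eqP; rewrite -H4; by case: (size Js).
Qed.

Lemma newI_solvable I : valid_instance I -> (solvable (newI I) <-> solvable I).
Proof.
case: I => B s Js; rewrite /valid_instance /solvable /= => /and4P[Hs HsB _ _].
split.
- move=> [ps' [Hsz Hst Hall Hu Hcov]].
  case: ps' Hsz Hst Hall Hu Hcov => [|q0 ps1] //= [Hsz] Hst Hall Hu Hcov.
  have Hq0 : q0 = s.+1.
    have := Hst 0 (ltn0Sn _); rewrite /=; lia.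
  subst q0.
  move: Hu => /andP[H0 Hu1].
  have [ps Hps1] : exists ps, ps1 = map succn ps.
    exists (map predn ps1).
    rewrite -map_comp map_id_in // => x Hx /=.
    by case: x Hx => // Hx; rewrite !inE Hx orbT in H0.
  subst ps1.
  exists ps; split.
  + by rewrite size_map in Hsz.
  + move=> i Hi; have := Hst i.+1 Hi.
    have Hi' : i < size (s :: ps) by rewrite /= size_map in Hsz *; lia.
    have Hi'' : i < size ps by rewrite size_map in Hsz *; lia.
    rewrite [nth 0 (s.+1 :: _) i.+1]/= [nth 0 [:: 0, _ & _] i.+1]/= [nth 0 (s.+1 :: Js) i.+1]/= (nth_map 0 0 succn Hi') (nth_map 0 0 succn Hi''); lia.
  + move: Hall => /andP[_]; rewrite all_map; apply: sub_all => y /=; done.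
  + move: Hu1 => /andP[Hn Hu']; rewrite (map_inj_uniq succn_inj) in Hu'; rewrite Hu' andbT; by rewrite (mem_map succn_inj) in Hn.
  + move=> x Hx HxB; have := Hcov x.+1 Hx HxB.
    by rewrite inE /= -/(map succn (s :: ps)) (mem_map succn_inj).
- move=> [ps [Hsz Hst Hall Hu Hcov]].
  exists (map succn (s :: ps)); split.
  + by rewrite /= size_map Hsz.
  + case=> [|i] Hi /=; first by left.
    have Hi' : i < size Js by lia.
    have := Hst i Hi'.
    rewrite (nth_map 0) ?Hsz // -/(map succn (s :: ps)) (nth_map 0) /=; [lia | lia].
  + by rewrite /= ltnS Hs HsB /= all_map; apply: sub_all Hall => y.
  + apply/andP; split; last by rewrite (map_inj_uniq succn_inj).
    by apply/mapP => -[y _].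
  + case=> [|x] Hx HxB; first by rewrite inE.
    by rewrite inE /= -/(map succn (s :: ps)) (mem_map succn_inj) Hcov.
Qed.

Lemma stepS q l a r q' a' : tm_delta M q a = Some (q', a', Stay) ->
  tm_step M (q, l, a, r) = (q', l, a', r).
Proof. by rewrite /tm_step => ->. Qed.

Theorem mainTheorem3 :
  exists (M : TM) (c k : nat), tm_wf M /\
    forall I : frog_instance, valid_instance I ->
      exists I' : frog_instance,
        [/\ valid_instance I',
            fi_start I' = 0,
            (solvable I' <-> solvable I)
          & computes_within M (encode I) (c * (size (encode I)).+1 ^ k)
                            (encode I')].
Proof.
exists M, 10, 1; split; first exact: M_wf.
move=> I HI; exists (newI I); split; [exact: newI_valid | by [] | exact: newI_solvable |].
have HO := encode_in123 (newI I).
rewrite -out_encode in HO; rewrite -out_encode.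
set x := encode I.
have Hx : all in123 x := encode_in123 I.
set f := tm_step M.
have E0 : init_config M x = cfg (enc (Sw mA [:: 1])) [::] x by case: (x).
have [w [m' [b' [H1 [H2 [H3 [H4 [H5 H6]]]]]]]] := @sweep x mA [:: 1] [::] Hx (erefl true) (erefl true) (erefl true).
rewrite cats0 in H1.
set bf := b' ++ tl m'.
have Hbf1 : all in123 bf by rewrite /bf all_cat H3; case: (m').
have Hbf2 : size bf <= 3 by rewrite /bf size_cat; case: (m') H5 => /=; lia.
have Hbf3 : bf != [::] by rewrite /bf; case: (b') H4.
have E1 : iter (1 + size x) f (init_config M x) = (enc (Fl bf), rev w, 0, [::]).
  rewrite iterD E0 H1; apply: stepS; apply: deltaE => //.
  - by rewrite /= H3 /=; lia.
  - by rewrite /= Hbf1 /=; lia.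
have E2 : iter (size bf + (1 + size x)) f (init_config M x) = (enc (Fl [::]), rev bf ++ rev w, 0, [::]).
  by rewrite iterD E1 flush //; lia.
have HwO : w ++ bf = 1 :: out mA x by rewrite /bf H2.
move: HO; rewrite -HwO => HO.
have [bf0 [z Ebf]] : exists bf0 z, bf = rcons bf0 z.
  by case/lastP: (bf) Hbf3 => // s0 z0 _; exists s0, z0.
rewrite Ebf in E2 HwO HO Hbf1 Hbf2.
rewrite rev_rcons /= in E2.
have E3 : iter (1 + (size (rcons bf0 z) + (1 + size x))) f (init_config M x)
          = (enc Rt, rev bf0 ++ rev w, z, [:: 0]).
  rewrite iterD E2; apply: stepLc; reflexivity.
have Hall : all in123 (z :: rev bf0 ++ rev w).
  move: HO; rewrite !all_cat all_rcons /= => /and3P[Hw Hz Hb0]; by rewrite Hz all_cat !all_rev Hb0 Hw.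
have [y [ys [E4 E5]]] := @ret (rev bf0 ++ rev w) z [:: 0] Hall.
exists ((size (rev bf0 ++ rev w)).+2 + (1 + (size (rcons bf0 z) + (1 + size x)))).
split.
  have S1 : size (rev bf0 ++ rev w) = size bf0 + size x by rewrite size_cat !size_rev H6.
  move: Hbf2; rewrite S1 !size_rcons expn1; lia.
rewrite iterD E3 E4; split; first by [].
rewrite /tm_output E5.
have -> : rev (z :: rev bf0 ++ rev w) = w ++ rcons bf0 z.
  by rewrite -rev_cat -rev_rcons revK rcons_cat.
rewrite HwO find_cat.
have -> : has (pred1 0) (1 :: out mA x) = false.
  apply/hasP => -[q Hq /eqP Eq]; move: HO; rewrite HwO => /allP /(_ q Hq).
  by rewrite Eq.
by rewrite /= addn0 take_size_cat.
Qed.
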